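(* There is an absolute constant $C$ such that for every $n$ and every $0<B=B(n)<n$ there exists a subspace $\mathcal{M}\subseteq\mathbb{C}^{2^n}$ of dimension at least $2^B$ that is $(\mathcal{E}_{\mathrm{bitflip}},\varepsilon)$ immune with $\varepsilon\le C\,\frac{B\log n}{n}$.
   Context: $\mathbb{C}^{2^n}$ has standard basis $\{|x\rangle : x\in\{0,1\}^n\}$. For $i\in[n]$, $S\subseteq\{0,1\}^{n-1}$, $E_{i,S}$ is the linear operator with $E_{i,S}|x\rangle=|x\oplus e_i\rangle$ if $(x_1,\dots,x_{i-1},x_{i+1},\dots,x_n)\in S$ and $E_{i,S}|x\rangle=|x\rangle$ otherwise (a controlled bit flip of qubit $i$); $\mathcal{E}_{\mathrm{bitflip}}=\{E_{i,S}: i\in[n], S\subseteq\{0,1\}^{n-1}\}$. A subspace $\mathcal{M}$ is $(\mathcal{E},\varepsilon)$ immune if for every $X\in\mathcal{E}$ and every $\phi\in\mathcal{M}$, $|\phi^*X\phi|\ge(1-\varepsilon)|\phi^*\phi|$. *)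

(* Defs.v *)
From mathcomp Require Import all_boot all_algebra.
From mathcomp Require Import reals exp Rstruct.
From mathcomp Require Import complex.
Set Implicit Arguments. Unset Strict Implicit. Unset Printing Implicit Defensive.
Import GRing.Theory Num.Theory.
Local Open Scope ring_scope.

Definition Rr := Rdefinitions.R.
Definition CC := Rr[i].

Definition bits (n : nat) := {ffun 'I_n -> bool}.

(* C^{2^n}: functions from the standard basis {|x> : x in {0,1}^n} to C,
   i.e. phi = \sum_x phi x |x>; a finite-dimensional vector space over C. *)
Definition qstate (n : nat) := {ffun bits n -> CC^o}.

Definition dotq n (phi psi : qstate n) : CC := \sum_x ((phi x)^* * psi x).

Definition flip n (i : 'I_n) (x : bits n) : bits n :=
  [ffun j => if j == i then ~~ x j else x j].

Definition del n (i : 'I_n) (x : bits n) : bits n.-1 :=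
  [ffun j => x (lift i j)].

Definition ctrl_flip n (i : 'I_n) (S : {set bits n.-1}) (x : bits n) : bits n :=
  if del i x \in S then flip i x else x.

(* E_{i,S} as a linear operator: the linear extension of |x> |-> |ctrl_flip x> *)
Definition E_op n (i : 'I_n) (S : {set bits n.-1}) (phi : qstate n) : qstate n :=
  [ffun y => \sum_(x | ctrl_flip i S x == y) phi x].

Definition E_bitflip n (X : qstate n -> qstate n) : Prop :=
  exists (i : 'I_n) (S : {set bits n.-1}), X = E_op i S.

Definition immune n (E : (qstate n -> qstate n) -> Prop)
    (M : {vspace qstate n}) (eps : Rr) : Prop :=
  forall X, E X -> forall phi, phi \in M ->
    (1 - (eps%:C)%C) * `|dotq phi phi| <= `|dotq phi (X phi)|.

(* Main.v *)
From HB Require Import structures.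
Require Import Defs.
From mathcomp Require Import all_boot all_algebra.
From mathcomp Require Import reals exp Rstruct.
From mathcomp Require Import complex.
From mathcomp Require Import ring lra zify.
Import order.Order.TTheory GRing.Theory Num.Theory.
Set Implicit Arguments. Unset Strict Implicit. Unset Printing Implicit Defensive.
Local Open Scope ring_scope.

Definition chr n (S : {set 'I_n}) (x : bits n) : CC :=
  \prod_(j in S) (if x j then -1 else 1).

Lemma flip_invol n (i : 'I_n) : involutive (flip i).
Proof.
by move=> x; apply/ffunP=> j; rewrite !ffunE; case: eqP => // _; rewrite negbK.
Qed.

Lemma chr_flip n (S : {set 'I_n}) i x :
  chr S (flip i x) = (if i \in S then -1 else 1) * chr S x.
Proof.
rewrite /chr; case: ifP => iS.
  rewrite (bigD1 i) //= [in RHS](bigD1 i) //= mulrA; congr (_ * _).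
    by rewrite ffunE eqxx; case: (x i); rewrite /= ?mulN1r ?opprK ?mulr1.
  by apply: eq_bigr => j /andP[_ ji]; rewrite ffunE (negbTE ji).
rewrite mul1r; apply: eq_bigr => j jS; rewrite ffunE; case: eqP => // ji.
by move: iS; rewrite -ji jS.
Qed.

Lemma chr_conj n (S : {set 'I_n}) x : (chr S x)^* = chr S x.
Proof.
apply: conj_Creal; rewrite /chr; apply: rpred_prod => j _.
by case: (x j); rewrite ?rpredN ?rpred1.
Qed.

Lemma chr_sq n (S : {set 'I_n}) x : chr S x * chr S x = 1.
Proof.
rewrite /chr -big_split /=; apply: big1 => j _.
by case: (x j); rewrite ?mulrNN mulr1.
Qed.

Lemma card_bits n : #|bits n| = (2 ^ n)%N.
Proof. by rewrite card_ffun card_bool card_ord. Qed.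

Lemma sum_flip n (i : 'I_n) (f : bits n -> CC) :
  \sum_x f x = \sum_x f (flip i x).
Proof.
exact: (reindex_inj (can_inj (flip_invol i))).
Qed.

Lemma chr_orth n (S T : {set 'I_n}) :
  \sum_x chr S x * chr T x = (2 ^ n)%:R * (S == T)%:R.
Proof.
case: eqP => [<-|/eqP neST].
  rewrite mulr1 (eq_bigr (fun _ => 1)) ?sumr_const ?card_bits // => x _.
  exact: chr_sq.
rewrite mulr0.
have [i iST] : exists i, (i \in S) != (i \in T).
  apply/existsP; apply: contraR neST => /existsPn H.
  by apply/eqP/setP => i; apply/eqP; have := H i; rewrite negbK.
set s := \sum_x _.
have ss : s = - s.
  rewrite {1}/s (sum_flip i) -sumrN; apply: eq_bigr => x _.
  by rewrite !chr_flip; move: iST; case: (i \in S); case: (i \in T) => //= _; ring.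
have : s *+ 2 = 0 by rewrite mulr2n {2}ss subrr.
by move/eqP; rewrite mulrn_eq0 /= => /eqP.
Qed.

Definition comb n (P : finType) (R : P -> {set 'I_n}) (a : P -> CC) : qstate n :=
  [ffun x => \sum_p a p * chr (R p) x].

Lemma parseval n (P : finType) (R : P -> {set 'I_n}) (Rinj : injective R)
  (a b : P -> CC) :
  dotq (comb R a) (comb R b) = (2 ^ n)%:R * \sum_p (a p)^* * b p.
Proof.
rewrite /dotq.
under eq_bigr => x _ do rewrite !ffunE rmorph_sum mulr_suml.
under eq_bigr => x _ do under eq_bigr => p _ do rewrite mulr_sumr.
rewrite exchange_big /= mulr_sumr; apply: eq_bigr => p _.
rewrite exchange_big /= (bigD1 p) //= [X in _ + X]big1 ?addr0.
  rewrite (eq_bigr (fun x => (a p)^* * b p * (chr (R p) x * chr (R p) x))).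
    by rewrite -mulr_sumr chr_orth eqxx mulr1 mulrC.
  move=> x _; rewrite rmorphM /= chr_conj; ring.
move=> q qp.
rewrite (eq_bigr (fun x => (a p)^* * b q * (chr (R p) x * chr (R q) x))).
  by rewrite -mulr_sumr chr_orth (inj_eq Rinj) eq_sym (negbTE qp) !mulr0.
move=> x _; rewrite rmorphM /= chr_conj; ring.
Qed.

Lemma comb_flip n (P : finType) (R : P -> {set 'I_n}) (a : P -> CC) i :
  [ffun y => comb R a y - comb R a (flip i y)] =
  comb R (fun p => a p * (if i \in R p then 2 else 0)).
Proof.
apply/ffunP => y; rewrite !ffunE -sumrB; apply: eq_bigr => p _.
rewrite chr_flip; case: (i \in R p); ring.
Qed.

Lemma ctrl_flip_invol n (i : 'I_n) S : involutive (ctrl_flip i S).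
Proof.
move=> x; rewrite /ctrl_flip.
have dl : del i (flip i x) = del i x.
  apply/ffunP => j; rewrite !ffunE; case: eqP => // h.
  by have := neq_lift i j; rewrite h eqxx.
case h: (del i x \in S); first by rewrite dl h flip_invol.
by rewrite h.
Qed.

Lemma E_opE n (i : 'I_n) S phi y : E_op i S phi y = phi (ctrl_flip i S y).
Proof.
rewrite ffunE (big_pred1 (ctrl_flip i S y)) // => x /=.
apply/eqP/eqP => [<-|->]; by rewrite ctrl_flip_invol.
Qed.

Lemma E_dot n (i : 'I_n) S (phi : qstate n) :
  dotq phi (E_op i S phi) = dotq phi phi -
    2^-1 * \sum_y (phi y - phi (ctrl_flip i S y))^* *
                  (phi y - phi (ctrl_flip i S y)).
Proof.
set s := ctrl_flip i S.
have sK : involutive s := ctrl_flip_invol i S.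
have r : forall f : bits n -> CC, \sum_y f (s y) = \sum_y f y.
  by move=> f; rewrite [RHS](reindex_inj (can_inj sK)).
have e1 : \sum_y (phi (s y))^* * phi (s y) = dotq phi phi by rewrite (r (fun y => (phi y)^* * phi y)).
have e2 : \sum_y (phi (s y))^* * phi y = dotq phi (E_op i S phi).
  rewrite -(r (fun y => (phi (s y))^* * phi y)) /dotq.
  by apply: eq_bigr => y _; rewrite sK E_opE.
have -> : \sum_y (phi y - phi (s y))^* * (phi y - phi (s y)) =
   dotq phi phi + \sum_y (phi (s y))^* * phi (s y)
   - \sum_y (phi (s y))^* * phi y - \sum_y (phi y)^* * phi (s y).
  rewrite /dotq -!big_split -!sumrB; apply: eq_bigr => y _.
  rewrite rmorphB /=; ring.
rewrite e1 e2.
have -> : \sum_y (phi y)^* * phi (s y) = dotq phi (E_op i S phi).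
  by apply: eq_bigr => y _; rewrite E_opE.
by field.
Qed.

Lemma comb_E n (P : finType) (R : P -> {set 'I_n}) (Rinj : injective R)
  (a : P -> CC) (i : 'I_n) S :
  (2 ^ n)%:R * (\sum_p (a p)^* * a p
       - 2 * \sum_p (if i \in R p then (a p)^* * a p else 0))
  <= dotq (comb R a) (E_op i S (comb R a)).
Proof.
set phi := comb R a.
rewrite E_dot.
have le : \sum_y (phi y - phi (ctrl_flip i S y))^* * (phi y - phi (ctrl_flip i S y))
   <= dotq [ffun y => phi y - phi (flip i y)] [ffun y => phi y - phi (flip i y)].
  rewrite /dotq; apply: ler_sum => y _; rewrite !ffunE /ctrl_flip.
  by case: ifP => _ //; rewrite subrr mulr0 mulrC mul_conjC_ge0.
rewrite /phi comb_flip parseval // in le.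
rewrite /phi parseval //.
have eq4 : \sum_p (a p * (if i \in R p then 2 else 0))^* *
                 (a p * (if i \in R p then 2 else 0))
        = 4 * \sum_p (if i \in R p then (a p)^* * a p else 0).
  rewrite mulr_sumr; apply: eq_bigr => p _; case: (i \in R p).
    rewrite rmorphM /= (conj_Creal (x := 2)) ?rpred_nat //; ring.
  by rewrite !mulr0.
rewrite eq4 in le.
set D := \sum_y _.
have h2 : 0 < (2 : CC)^-1 by rewrite invr_gt0 ltr0n.
have := ler_wpM2l (ltW h2) le.
set T := \sum_p (if _ then _ else _).
move=> H.
rewrite mulrBr [X in _ <= _ - X]mulrC; apply: lerB => //.
rewrite mulrC; apply: (le_trans H); rewrite le_eqVlt; apply/orP; left; apply/eqP; by field.
Qed.

Definition Rb n B m (p : (bits B * 'I_m)%type) : {set 'I_n} :=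
  [set i : 'I_n | (i %% m == p.2)%N &&
     ((i %/ m == 0)%N || [exists j : 'I_B, p.1 j && (i %/ m == j.+1)%N])].

Lemma Rb_inj n B m : (0 < m)%N -> (B.+1 * m <= n)%N -> injective (@Rb n B m).
Proof.
move=> m0 Bmn [b k] [b' k'] E.
have kn : (k < n)%N.
  have := ltn_ord k; move: Bmn; nia.
have kk : k = k'.
  have : Ordinal kn \in Rb n (b, k) by rewrite inE /= modn_small // divn_small // !eqxx.
  rewrite E inE /= modn_small // => /andP[/eqP h _]; exact: val_inj.
subst k'; congr (_, _); apply/ffunP => j.
have en : (j.+1 * m + k < n)%N.
  have := ltn_ord k; have := ltn_ord j; move: Bmn; nia.
have mem : forall c : bits B, (Ordinal en \in Rb n (c, k)) = c j.
  move=> c; rewrite inE /= modnMDl modn_small // eqxx /=.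
  rewrite divnMDl // divn_small // addn0 /=.
  apply/existsP/idP => [[j' /andP[cj /eqP h]]|cj]; last by exists j; rewrite cj eqxx.
  by have -> : j = j' by apply: val_inj; case: h.
by rewrite -mem E mem.
Qed.

Lemma Rb_norm B m (c : bits B -> CC) :
  \sum_(p : bits B * 'I_m) (c p.1)^* * c p.1 = m%:R * \sum_b (c b)^* * c b.
Proof.
rewrite -(pair_big xpredT xpredT (fun b (k : 'I_m) => (c b)^* * c b)) /=.
rewrite mulr_sumr; apply: eq_bigr => b _.
by rewrite sumr_const card_ord mulr_natl.
Qed.

Lemma Rb_bound n B m (m0 : (0 < m)%N) (c : bits B -> CC) (i : 'I_n) :
  \sum_(p : bits B * 'I_m) (if i \in Rb n p then (c p.1)^* * c p.1 else 0)
  <= \sum_b (c b)^* * c b.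
Proof.
rewrite -(pair_big xpredT xpredT
   (fun b (k : 'I_m) => if i \in Rb n (b, k) then (c b)^* * c b else 0)) /=.
apply: ler_sum => b _.
pose k0 : 'I_m := Ordinal (ltn_pmod i m0).
have ge : 0 <= (c b)^* * c b by rewrite mulrC mul_conjC_ge0.
apply: (@le_trans _ _ (\sum_(k : 'I_m) if k == k0 then (c b)^* * c b else 0)).
  apply: ler_sum => k _; case: ifP => //.
    rewrite inE /= => /andP[/eqP h _].
    by have -> : k == k0 by apply/eqP/val_inj; rewrite /= h.
  by move=> _; case: ifP.
by rewrite -big_mkcond big_pred1_eq.
Qed.

Definition Fm n B m (c : {ffun bits B -> CC^o}) : qstate n :=
  comb (@Rb n B m) (fun p => c p.1).

Lemma Fm_lin n B m : linear (@Fm n B m).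
Proof.
move=> a u v; apply/ffunP => x; rewrite !ffunE /=.
rewrite scaler_sumr -big_split /=; apply: eq_bigr => p _.
by rewrite !ffunE /= mulrDl scalerAl.
Qed.

HB.instance Definition _ n B m :=
  GRing.isLinear.Build CC {ffun bits B -> CC^o} (qstate n) *:%R (@Fm n B m)
    (@Fm_lin n B m).

Lemma Fm_inj n B m : (0 < m)%N -> (B.+1 * m <= n)%N -> injective (@Fm n B m).
Proof.
move=> m0 Bmn c1 c2 E.
have E0 : Fm n m (c1 - c2) = 0 by rewrite linearB /= E subrr.
have h : dotq (Fm n m (c1 - c2)) (Fm n m (c1 - c2)) = 0.
  by rewrite E0 /dotq big1 // => x _; rewrite ffunE mulr0.
rewrite /Fm parseval ?Rb_norm in h; last exact: Rb_inj.
apply/eqP; rewrite -subr_eq0; apply/eqP/ffunP => b; rewrite !ffunE.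
have : \sum_b (c1 b - c2 b)^* * (c1 b - c2 b) = 0.
  move/eqP: h; rewrite !mulf_eq0 pnatr_eq0 expn_eq0 /= pnatr_eq0 (negbTE (lt0n_neq0 m0)) /=.
  under eq_bigr => b' _ do rewrite !ffunE.
  by move/eqP.
move/eqP; rewrite psumr_eq0 => [/allP/(_ b (mem_index_enum b))|b' _].
  by rewrite mulf_eq0 conjC_eq0 orbb => /eqP.
by rewrite mulrC mul_conjC_ge0.
Qed.

Definition Msp n B m : {vspace qstate n} := limg (linfun (@Fm n B m)).

Lemma Msp_dim n B m : (0 < m)%N -> (B.+1 * m <= n)%N -> (2 ^ B <= \dim (Msp n B m))%N.
Proof.
move=> m0 Bmn; rewrite /Msp limg_dim_eq.
  rewrite dimvf /dim /= card_ffun card_bool card_ord.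
  by rewrite [X in (_ * X)%N](_ : _ = 1%N) // muln1.
have /lker0P/eqP -> : injective (linfun (@Fm n B m)).
  by move=> x y; rewrite !lfunE; apply: Fm_inj.
exact: capv0.
Qed.

Lemma Msp_immune n B m : (0 < m)%N -> (B.+1 * m <= n)%N ->
  immune (@E_bitflip n) (Msp n B m) (2 / m%:R).
Proof.
move=> m0 Bmn X [i [S ->]] phi /memv_imgP [c _ ->].
rewrite lfunE /= /Fm.
have Ri := Rb_inj m0 Bmn.
set Y := \sum_b (c b)^* * c b.
have Y0 : 0 <= Y by apply: sumr_ge0 => b _; rewrite mulrC mul_conjC_ge0.
rewrite parseval // Rb_norm -/Y.
have H := comb_E Ri (fun p => c p.1) i S.
rewrite Rb_norm -/Y in H.
have Hb := @Rb_bound n B m m0 c i.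
set r := (2 ^ n)%:R * (m%:R * Y - 2 * Y).
have rV : r <= dotq (comb (Rb n (m:=m)) (fun p => c p.1))
                (E_op i S (comb (Rb n (m:=m)) (fun p => c p.1))).
  apply: le_trans H; rewrite /r ler_pM2l ?ltr0n ?expn_gt0 //.
  by rewrite lerD2l lerN2 ler_pM2l ?ltr0n.
have Yr : Y \is Num.real by apply: ger0_real.
have rr : r \is Num.real by rewrite /r rpredM ?rpred_nat ?rpredB ?rpredM ?rpred_nat.
set V := dotq _ _ in rV *.
have VR : V \is Num.real.
  have -> : V = (V - r) + r by rewrite subrK.
  by rewrite rpredD // ger0_real // subr_ge0.
rewrite ger0_norm; last by rewrite mulr_ge0 ?mulr_ge0 ?ler0n.
apply: (le_trans _ (real_ler_norm VR)); apply: le_trans rV.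
rewrite /r fmorph_div !rmorph_nat le_eqVlt; apply/orP; left; apply/eqP.
field; by rewrite pnatr_eq0 -lt0n.
Qed.

Lemma ln_half (x : Rr) : 2 <= x -> 1 / 2 <= ln x.
Proof.
move=> x2.
have h : ln (1 + - (1/2) : Rr) <= - (1/2).
  by apply: le_ln1Dx; lra.
have e : (1 + - (1/2) : Rr) = 2^-1 by field.
rewrite e lnV ?posrE ?ltr0n // in h.
apply: (le_trans (y := ln (2 : Rr))); first lra.
by rewrite ler_ln ?posrE ?ltr0n //; lra.
Qed.

Lemma eps_bound (n B m : nat) : (0 < B)%N -> (0 < m)%N -> (2 <= n)%N ->
  (n <= 4 * B * m)%N ->
  2 / m%:R <= 16 * (B%:R * ln (n%:R : Rr) / n%:R).
Proof.
move=> B0 m0 n2 nm.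
have L : 1/2 <= ln (n%:R : Rr) by apply: ln_half; rewrite (ler_nat _ 2).
have nm' : (n%:R : Rr) <= 4 * B%:R * m%:R.
  by rewrite -!natrM ler_nat.
have mp : (0 : Rr) < m%:R by rewrite ltr0n.
have np : (0 : Rr) < n%:R by rewrite ltr0n; nia.
have Bp : (0 : Rr) <= B%:R by rewrite ler0n.
rewrite -subr_ge0.
have -> : 16 * (B%:R * ln (n%:R : Rr) / n%:R) - 2 / m%:R =
   (16 * B%:R * ln n%:R * m%:R - 2 * n%:R) / (m%:R * n%:R).
  by field; rewrite !gt_eqF.
apply: divr_ge0; last by rewrite mulr_ge0 // ltW.
have BM : (0 : Rr) <= B%:R * m%:R by rewrite mulr_ge0 // ltW.
have : 0 <= (B%:R * m%:R) * (ln (n%:R : Rr) - 1/2) by rewrite mulr_ge0 // subr_ge0.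
nra.
Qed.

Theorem theorem3 :
  exists C : Rr, forall n B : nat, (0 < B < n)%N ->
    exists M : {vspace qstate n},
      (2 ^ B <= \dim M)%N /\
      exists eps : Rr,
        eps <= C * (B%:R * ln (n%:R : Rr) / n%:R) /\ immune (@E_bitflip n) M eps.
Proof.
exists 16 => n B /andP[B0 Bn].
have m0 : (0 < n %/ B.+1)%N by rewrite divn_gt0.
have Bmn : (B.+1 * (n %/ B.+1) <= n)%N by rewrite mulnC leq_trunc_div.
exists (Msp n B (n %/ B.+1)); split; first exact: Msp_dim.
exists (2 / (n %/ B.+1)%:R); split; last exact: Msp_immune.
apply: eps_bound => //; first nia.
have := ltn_ceil n (ltn0Sn B); move: m0; nia.
Qed.
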